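(* Let $\mathbb{F}$ be a field, let $A$ be a matrix over $\mathbb{F}$ with $n$ columns, and let $B$ be a matrix over $\mathbb{F}$ with $n$ columns whose row space is the orthogonal complement $W^\perp=\{x\in\mathbb{F}^n: x\cdot w=0\ \forall w\in W\}$ of the row space $W$ of $A$ (so that $M(B)$ represents the dual matroid $M(A)^*$). Then $\mathrm{csd}(M(A))=\mathrm{dsd}(M(B))$.
   Context: Here $x\cdot w=\sum_i x_iw_i$. $M(A)$ is the column matroid of $A$ (ground set: the columns, indexed by $\{1,\dots,n\}$; independent sets: linearly independent sets of columns). A matroid is connected if any two elements lie in a common circuit; components are maximal connected restrictions. Contraction$^*$-depth: for a matrix $A$ with $m$ rows and a subspace $K\subseteq\mathbb{F}^m$, let $M(A,K)$ be the matroid on the columns where a set $\{u_1,\dots,u_\ell\}$ is dependent iff some $\sum\alpha_iu_i\in K$ with not all $\alpha_i=0$. Set $\mathrm{csd}(A,K)=0$ if $M(A,K)$ has rank $0$; otherwise if $M(A,K)$ is disconnected, $\mathrm{csd}(A,K)=\max_C \mathrm{csd}(A_C,K)$ over components $C$ ($A_C$ the submatrix of columns in $C$); otherwise $\mathrm{csd}(A,K)=1+\min_{v\in\mathbb{F}^m}\mathrm{csd}(A,K+\mathrm{span}(v))$; and $\mathrm{csd}(M(A))=\mathrm{csd}(A,\{0\})$. Deletion$^*$-depth: for a matrix $B$ with $n$ columns, $\mathrm{dsd}(M(B))=0$ if the rank of $M(B)$ equals its number of elements; otherwise if $M(B)$ is disconnected, $\mathrm{dsd}(M(B))$ is the maximum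 of $\mathrm{dsd}(M(B_C))$ over the components $C$; otherwise $\mathrm{dsd}(M(B))=1+\min_{v\in\mathbb{F}^n}\mathrm{dsd}(M(B\oplus v^\top))$, where $B\oplus v^\top$ is $B$ with the row $v^\top$ appended. *)

(* Defs.v *)
From HB Require Import structures.
From mathcomp Require Import all_boot all_order all_algebra.
Set Implicit Arguments. Unset Strict Implicit. Unset Printing Implicit Defensive.
Import GRing.Theory.
Local Open Scope ring_scope.

Section MatroidNotions.
Variables (n : nat) (dep : {set 'I_n} -> Prop).

Definition indep (X : {set 'I_n}) : Prop := ~ dep X.

Definition rank_of (S : {set 'I_n}) (r : nat) : Prop :=
  (exists2 X : {set 'I_n}, X \subset S & indep X /\ #|X| = r) /\
  (forall X : {set 'I_n}, X \subset S -> indep X -> (#|X| <= r)%N).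

Definition circuit (C : {set 'I_n}) : Prop :=
  dep C /\ forall D : {set 'I_n}, D \proper C -> ~ dep D.

(* the restriction to S is connected: any two distinct elements of S lie
   in a common circuit of the restriction (= a circuit contained in S) *)
Definition connected_on (S : {set 'I_n}) : Prop :=
  forall e f : 'I_n, e \in S -> f \in S -> e != f ->
    exists C : {set 'I_n}, [/\ circuit C, C \subset S, e \in C & f \in C].

Definition component (S C : {set 'I_n}) : Prop :=
  [/\ C \subset S, connected_on C &
      forall C' : {set 'I_n}, C \subset C' -> C' \subset S -> connected_on C' -> C' = C].

End MatroidNotions.

(* The matroid M(M, K): columns of M : 'M_(k,n) (vectors of F^k), a set *)
(* X of columns is dependent iff some nontrivial combination of them     *)
(* lies in the subspace K (given as the row space of a k x k matrix).    *)
(* alpha *m M^T = \sum_j alpha_j (column j of M)^T.                      *)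
(* With K = 0 this is the column matroid M(M).                           *)
Definition mat_dep (F : fieldType) (k n : nat) (M : 'M[F]_(k, n)) (K : 'M[F]_k)
    (X : {set 'I_n}) : Prop :=
  exists alpha : 'rV[F]_n,
    [/\ alpha != 0, (forall i : 'I_n, i \notin X -> alpha 0 i = 0) &
        (alpha *m M^T <= K)%MS].

(* Contraction*-depth.  csd_le A d K S  means  csd(A_S, K) <= d, where    *)
(* A_S is the submatrix of A on the columns S (inductive = least fixpoint *)
(* of the recursive definition).                                          *)
Inductive csd_le (F : fieldType) (m n : nat) (A : 'M[F]_(m, n)) :
    nat -> 'M[F]_m -> {set 'I_n} -> Prop :=
| csd_rank0 d K S :
    rank_of (mat_dep A K) S 0 -> csd_le A d K S
| csd_disconnected d K S :
    ~ rank_of (mat_dep A K) S 0 -> ~ connected_on (mat_dep A K) S ->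
    (forall C, component (mat_dep A K) S C -> csd_le A d K C) ->
    csd_le A d K S
| csd_connected d K S (v : 'rV[F]_m) :
    ~ rank_of (mat_dep A K) S 0 -> connected_on (mat_dep A K) S ->
    csd_le A d (K + v)%MS S -> csd_le A d.+1 K S.

Definition csd_is (F : fieldType) (m n : nat) (A : 'M[F]_(m, n)) (d : nat) : Prop :=
  csd_le A d 0 setT /\ forall d', csd_le A d' 0 setT -> (d <= d')%N.

(* Deletion*-depth.  dsd_le d B S  means  dsd(M(B_S)) <= d.  Appending a *)
(* row v^T to B is  col_mx B v.                                           *)
Inductive dsd_le (F : fieldType) (n : nat) :
    nat -> forall p : nat, 'M[F]_(p, n) -> {set 'I_n} -> Prop :=
| dsd_free d p (B : 'M[F]_(p, n)) S :
    rank_of (mat_dep B 0) S #|S| -> dsd_le d B S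
| dsd_disconnected d p (B : 'M[F]_(p, n)) S :
    ~ rank_of (mat_dep B 0) S #|S| -> ~ connected_on (mat_dep B 0) S ->
    (forall C, component (mat_dep B 0) S C -> dsd_le d B C) ->
    dsd_le d B S
| dsd_connected d p (B : 'M[F]_(p, n)) S (v : 'rV[F]_n) :
    ~ rank_of (mat_dep B 0) S #|S| -> connected_on (mat_dep B 0) S ->
    dsd_le d (col_mx B v) S -> dsd_le d.+1 B S.

Definition dsd_is (F : fieldType) (p n : nat) (B : 'M[F]_(p, n)) (d : nat) : Prop :=
  dsd_le d B setT /\ forall d', dsd_le d' B setT -> (d <= d')%N.

(* Main.v *)
Require Import Defs.
From HB Require Import structures.
From mathcomp Require Import all_boot all_order all_algebra.
From mathcomp Require Import ring.
From Stdlib Require Import ClassicalEpsilon Classical_Prop.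
Set Implicit Arguments. Unset Strict Implicit. Unset Printing Implicit Defensive.
Import GRing.Theory.
Local Open Scope ring_scope.

Definition pb (Q : Prop) : bool := if excluded_middle_informative Q then true else false.
Lemma pbP (Q : Prop) : pb Q <-> Q.
Proof. rewrite /pb; case: excluded_middle_informative => h; split => //. Qed.

Section Gen.
Variables (F : fieldType) (n : nat).
Implicit Types (a b u : 'rV[F]_n) (X S T C D : {set 'I_n}).

Definition supp a : {set 'I_n} := [set i | a 0 i != 0].
Definition supp_in X a := forall i, i \notin X -> a 0 i = 0.
Definition proj T a : 'rV[F]_n := \row_i (if i \in T then a 0 i else 0).
Definition dot a b : F := \sum_i a 0 i * b 0 i.
Definition depP (P : 'rV[F]_n -> Prop) X :=
  exists alpha : 'rV[F]_n, [/\ alpha != 0, (forall i : 'I_n, i \notin X -> alpha 0 i = 0) & P alpha].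
Definition delta (e : 'I_n) : 'rV[F]_n := \row_j (if j == e then 1 else 0).


Lemma inSupp a i : (i \in supp a) = (a 0 i != 0).
Proof. by rewrite inE. Qed.

Lemma supp_inE X a : supp_in X a <-> supp a \subset X.
Proof.
split.
  move=> h; apply/subsetP => i; rewrite inSupp; apply: contraR => hi; apply/eqP; exact: h.
move=> /subsetP h i hi; apply/eqP/negPn; apply: contra hi => hai; apply: h; by rewrite inSupp.
Qed.

Lemma supp_in_supp a : supp_in (supp a) a.
Proof. by apply/supp_inE. Qed.

Lemma supp_in_sub X (Y : {set 'I_n}) a : X \subset Y -> supp_in X a -> supp_in Y a.
Proof. move=> /subsetP h ha i hi; apply: ha; apply: contra hi; exact: h. Qed.

Lemma nzrowP a : a != 0 -> exists i, a 0 i != 0.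
Proof.
move=> h; apply: NNPP => hn; move/eqP: h; apply; apply/rowP => i; rewrite mxE.
apply: NNPP => hi; apply: hn; exists i; by apply/eqP.
Qed.

Lemma dotC a b : dot a b = dot b a.
Proof. by apply: eq_bigr => i _; rewrite mulrC. Qed.

Lemma dot_lin a b c x : dot (a - c *: b) x = dot a x - c * dot b x.
Proof.
rewrite /dot mulr_sumr -sumrB; apply: eq_bigr => i _; rewrite !mxE; ring.
Qed.

Lemma dot_linr a b c x : dot x (a - c *: b) = dot x a - c * dot x b.
Proof. by rewrite dotC dot_lin dotC (dotC b). Qed.

Lemma dot0l a : dot 0 a = 0.
Proof. by rewrite /dot big1 // => i _; rewrite mxE mul0r. Qed.

Lemma dot_proj T a b : dot (proj T a) b = dot a (proj T b).
Proof. by apply: eq_bigr => i _; rewrite !mxE; case: (i \in T); rewrite ?mul0r ?mulr0. Qed.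

Lemma dot_delta e a : dot (delta e) a = a 0 e.
Proof.
rewrite /dot (bigD1 e) //= big1 ?addr0; first by rewrite mxE eqxx mul1r.
by move=> i /negbTE hi; rewrite mxE hi mul0r.
Qed.

Lemma proj_id T a : supp_in T a -> proj T a = a.
Proof. move=> h; apply/rowP => i; rewrite mxE; case: ifP => // /negbT hi; by rewrite h. Qed.

Lemma proj_supp_in S T a : supp_in S a -> supp_in S (proj T a).
Proof. move=> h i hi; rewrite mxE h //; by case: ifP. Qed.

Lemma proj_supp_inT T a : supp_in T (proj T a).
Proof. move=> i hi; by rewrite mxE (negbTE hi). Qed.

Lemma proj_lin T a b c : proj T (a - c *: b) = proj T a - c *: proj T b.
Proof. apply/rowP => i; rewrite !mxE; case: ifP => _; ring. Qed.

Lemma proj0 T : proj T 0 = 0.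
Proof. apply/rowP => i; rewrite !mxE; by case: ifP. Qed.

Lemma dot_supp S a b : supp_in S a -> dot a b = dot a (proj S b).
Proof. by move=> h; rewrite -dot_proj proj_id. Qed.

Lemma delta_supp S e : e \in S -> supp_in S (delta e).
Proof. move=> he i hi; rewrite mxE; case: eqP => // hie; by rewrite hie he in hi. Qed.

Lemma delta_nz e : delta e != 0.
Proof. apply/eqP => /rowP /(_ e); rewrite !mxE eqxx; apply/eqP; exact: oner_neq0. Qed.

Lemma elim_supp a (e : 'rV[F]_n) (h : 'I_n) : e 0 h != 0 -> supp e \subset supp a ->
   supp (a - (a 0 h / e 0 h) *: e) \subset supp a :\ h.
Proof.
move=> heh hs; apply/subsetP => i; rewrite inSupp in_setD1 => hi; apply/andP; split.
  apply: contraNneq hi => ->; by rewrite !mxE divfK // subrr eqxx.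
rewrite inSupp; apply: contra hi => /eqP hai.
have hei : e 0 i = 0 by apply: (proj2 (supp_inE _ _) hs); rewrite inSupp hai eqxx.
by rewrite !mxE hai hei mulr0 subr0.
Qed.

Lemma card_elim a (e : 'rV[F]_n) (h : 'I_n) : e 0 h != 0 -> supp e \subset supp a -> a 0 h != 0 ->
  ltn #|supp (a - (a 0 h / e 0 h) *: e)| #|supp a|.
Proof.
move=> h1 h2 h3; apply: leq_ltn_trans (subset_leq_card (elim_supp h1 h2)) _.
by rewrite [#|supp a|](cardsD1 h) inSupp h3 add1n ltnSn.
Qed.

Lemma supp_in_lin S a b c : supp_in S a -> supp_in S b -> supp_in S (a - c *: b).
Proof. by move=> ha hb i hi; rewrite !mxE ha // hb // mulr0 subr0. Qed.

End Gen.
Arguments delta {F n} e.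


Section Sub.
Variables (F : fieldType) (n : nat) (P : 'rV[F]_n -> Prop).
Hypotheses (P0 : P 0) (PD : forall a b, P a -> P b -> P (a + b))
  (PZ : forall c a, P a -> P (c *: a)).
Implicit Types (a b u : 'rV[F]_n) (X S T C D : {set 'I_n}).
Local Notation dep := (depP P).
Local Set Default Proof Using "All".

Lemma PB a b c : P a -> P b -> P (a - c *: b).
Proof. move=> ha hb; rewrite -scaleNr; exact: PD ha (PZ _ hb). Qed.

Lemma dep_supp a : a != 0 -> P a -> dep (supp a).
Proof. move=> h1 h2; exists a; split => //; exact: supp_in_supp. Qed.

Lemma circuit_exact D : circuit dep D -> exists eta, [/\ eta != 0, P eta & supp eta = D].
Proof.
case=> [[a [anz ha Pa]] hmin]; exists a; split => //.
have hs : supp a \subset D by apply/supp_inE.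
apply/eqP; rewrite eqEsubset hs /=.
case: (boolP (D \subset supp a)) => // hn; exfalso.
apply: (hmin (supp a)); last exact: dep_supp.
rewrite properEneq hs andbT; apply: contraNneq hn => ->; exact: subxx.
Qed.

Lemma circuit_in k : forall d, leq #|supp d| k -> P d -> forall f, d 0 f != 0 ->
  exists D, [/\ circuit dep D, f \in D & D \subset supp d].
Proof.
elim: k => [|k IH] d hk Pd f hf.
  have : (0 < #|supp d|)%N by apply/card_gt0P; exists f; rewrite inSupp.
  by rewrite ltnNge hk.
case: (classic (exists eta, [/\ eta != 0, P eta & supp eta \proper supp d])) => [[eta [enz Pe hpr]]|hno].
- have hlt := proper_card hpr.
  have hsub : supp eta \subset supp d := proper_sub hpr.
  case: (boolP (eta 0 f != 0)) => hef.
  + have [D [hD hfD hDs]] := IH eta (leq_trans hlt hk) Pe f hef.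
    exists D; split => //; exact: subset_trans hDs hsub.
  + have [h hh] := nzrowP enz.
    have hdh : d 0 h != 0.
      by rewrite -inSupp; apply: (subsetP hsub); rewrite inSupp.
    have hlt' := card_elim hh hsub hdh.
    have Pd' : P (d - (d 0 h / eta 0 h) *: eta) by apply: PB.
    have hd'f : (d - (d 0 h / eta 0 h) *: eta) 0 f != 0.
      by rewrite !mxE (eqP (negbNE hef)) mulr0 subr0.
    have [D [hD hfD hDs]] := IH _ (leq_trans hlt' hk) Pd' f hd'f.
    exists D; split => //; apply: subset_trans hDs _.
    apply: subset_trans (elim_supp hh hsub) _; exact: subsetDl.
- exists (supp d); split => //; last by rewrite inSupp.
  split.
    apply: dep_supp Pd; apply/eqP => hd0; move: hf; by rewrite hd0 mxE eqxx.
  move=> D' hD' [a [anz ha Pa]]; apply: hno; exists a; split => //.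
  apply: sub_proper_trans hD'; by apply/supp_inE.
Qed.

Lemma strong_elim C1 C2 x y : circuit dep C1 -> circuit dep C2 -> y \in C1 -> y \in C2 ->
  x \in C1 -> x \notin C2 ->
  exists C3, [/\ circuit dep C3, x \in C3, y \notin C3 & C3 \subset C1 :|: C2].
Proof.
move=> h1 h2 y1 y2 x1 x2.
have [e1 [n1 hP1 s1]] := circuit_exact h1.
have [e2 [n2 hP2 s2]] := circuit_exact h2.
have hy2 : e2 0 y != 0 by rewrite -inSupp s2.
have hPd := PB (e1 0 y / e2 0 y) hP1 hP2.
have hdy : (e1 - (e1 0 y / e2 0 y) *: e2) 0 y = 0 by rewrite !mxE divfK // subrr.
have he2x : e2 0 x = 0 by apply/eqP; move: x2; rewrite -s2 inSupp negbK.
have hdx : (e1 - (e1 0 y / e2 0 y) *: e2) 0 x != 0.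
  by rewrite !mxE he2x mulr0 subr0 -inSupp s1.
have [D [hD hxD hDs]] := circuit_in (leqnn _) hPd hdx.
exists D; split => //.
  apply/negP => hyD; have := subsetP hDs y hyD; by rewrite inSupp hdy eqxx.
apply: subset_trans hDs _; apply/subsetP => i; rewrite inSupp => hi.
rewrite inE -s1 -s2 !inSupp; apply: contraR hi; rewrite negb_or !negbK => /andP[/eqP a1 /eqP a2].
by rewrite !mxE a1 a2 mulr0 subr0.
Qed.

Lemma circ_incomp C D : circuit dep C -> circuit dep D -> D \proper C -> False.
Proof. move=> [_ hC] [hD _] hp; exact: hC D hp hD. Qed.

Lemma meets_out C1 C3 y : circuit dep C1 -> circuit dep C3 -> y \in C1 -> y \notin C3 ->
  exists w, w \in C3 /\ w \notin C1.
Proof.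
move=> h1 h3 y1 y3; apply: NNPP => hn; apply: (circ_incomp h1 h3).
rewrite properE; apply/andP; split.
  apply/subsetP => w hw; apply/negPn/negP => hw1; apply: hn; by exists w.
apply/negP => hs; move: y3; by rewrite (subsetP hs y y1).
Qed.

Lemma circ_trans N : forall C1 C2 x z, leq #|C1 :|: C2| N -> circuit dep C1 -> circuit dep C2 ->
  x \in C1 -> z \in C2 -> (exists y, y \in C1 /\ y \in C2) ->
  exists C, [/\ circuit dep C, x \in C, z \in C & C \subset C1 :|: C2].
Proof.
elim: N => [|N IH] C1 C2 x z hN h1 h2 hx hz [y [y1 y2]].
  have : (0 < #|C1 :|: C2|)%N by apply/card_gt0P; exists x; rewrite inE hx.
  by rewrite ltnNge hN.
case: (boolP (x \in C2)) => hx2; first by exists C2; split => //; exact: subsetUr.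
case: (boolP (z \in C1)) => hz1; first by exists C1; split => //; exact: subsetUl.
have [C3 [h3 x3 y3 s3]] := strong_elim h1 h2 y1 y2 hx hx2.
have [C4 [h4 z4 y4 s4]] := strong_elim h2 h1 y2 y1 hz hz1.
have s4' : C4 \subset C1 :|: C2 by apply: subset_trans s4 _; rewrite setUC.
have [w3 [w3C3 w3C1]] := meets_out h1 h3 y1 y3.
have [w4 [w4C4 w4C2]] := meets_out h2 h4 y2 y4.
have w3C2 : w3 \in C2.
  by have := subsetP s3 w3 w3C3; rewrite inE (negbTE w3C1).
have w4C1 : w4 \in C1.
  by have := subsetP s4' w4 w4C4; rewrite inE (negbTE w4C2) orbF.
have sub3 : C3 :|: C2 \subset C1 :|: C2 by rewrite subUset s3 subsetUr.
have sub4 : C1 :|: C4 \subset C1 :|: C2 by rewrite subUset s4' subsetUl.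
case: (ltnP #|C3 :|: C2| #|C1 :|: C2|) => c3.
  have [C [hC xC zC sC]] := IH C3 C2 x z (leq_trans c3 hN) h3 h2 x3 hz (ex_intro _ w3 (conj w3C3 w3C2)).
  exists C; split => //; exact: subset_trans sC sub3.
have e3 : C3 :|: C2 = C1 :|: C2 by apply/eqP; rewrite eqEcard sub3 c3.
case: (ltnP #|C1 :|: C4| #|C1 :|: C2|) => c4.
  have [C [hC xC zC sC]] := IH C1 C4 x z (leq_trans c4 hN) h1 h4 hx z4 (ex_intro _ w4 (conj w4C1 w4C4)).
  exists C; split => //; exact: subset_trans sC sub4.
have w4C3 : w4 \in C3.
  have : w4 \in C3 :|: C2 by rewrite e3 inE w4C1.
  by rewrite inE (negbTE w4C2) orbF.
have sub34 : C3 :|: C4 \subset (C1 :|: C2) :\ y.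
  rewrite subUset; apply/andP; split; apply/subsetP => i hi; rewrite in_setD1; apply/andP; split.
  - by apply: contraNneq y3 => <-.
  - exact: (subsetP s3).
  - by apply: contraNneq y4 => <-.
  - exact: (subsetP s4').
have c34 : (#|C3 :|: C4| < #|C1 :|: C2|)%N.
  apply: leq_ltn_trans (subset_leq_card sub34) _.
  have hy : y \in C1 :|: C2 by rewrite inE y1.
  by rewrite [#|C1 :|: C2|](cardsD1 y) hy add1n ltnSn.
have [C [hC xC zC sC]] := IH C3 C4 x z (leq_trans c34 hN) h3 h4 x3 z4 (ex_intro _ w4 (conj w4C3 w4C4)).
exists C; split => //; apply: subset_trans sC (subset_trans sub34 _); exact: subsetDl.
Qed.



Definition rel S e f := exists C, [/\ circuit dep C, C \subset S, e \in C & f \in C].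
Definition cls S e := [set f in S | pb (f = e \/ rel S e f)].
Definition Sep S T := T \subset S /\ forall a, supp_in S a -> P a -> P (proj T a).

Lemma clsP S e f : f \in cls S e <-> f \in S /\ (f = e \/ rel S e f).
Proof.
rewrite inE; split => [/andP [h1 h2]|[h1 h2]]; first by split => //; apply/pbP.
by rewrite h1 /=; apply/pbP.
Qed.

Lemma sep_circuit S T D x : Sep S T -> circuit dep D -> D \subset S -> x \in D -> x \in T ->
  D \subset T.
Proof.
move=> [hTS hT] hD hDS xD xT.
have [eta [enz Pe se]] := circuit_exact hD.
case: (boolP (D \subset T)) => // hn; exfalso.
apply: (hD.2 (D :&: T)).
  rewrite properE subsetIl /=; apply: contra hn => h; exact: subset_trans h (subsetIr _ _).
exists (proj T eta); split.
- apply/eqP => /rowP /(_ x); rewrite !mxE xT => h0; move: xD; by rewrite -se inSupp h0 eqxx.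
- move=> i; rewrite inE negb_and => /orP [hi|hi]; rewrite mxE; last by rewrite (negbTE hi).
  case: ifP => // _; apply/eqP; move: hi; by rewrite -se inSupp negbK.
- apply: hT => //; apply/supp_inE; by rewrite se.
Qed.

Lemma sep_of_closed S T : T \subset S ->
  (forall D x, circuit dep D -> D \subset S -> x \in D -> x \in T -> D \subset T) -> Sep S T.
Proof.
move=> hTS hcl; split => //.
suff: forall k a, leq #|supp a| k -> supp_in S a -> P a -> P (proj T a).
  by move=> h a; exact: h _ a (leqnn _).
elim => [|k IH] a hk hS Pa.
  have -> : a = 0.
    apply/rowP => i; rewrite mxE; apply/eqP/negPn/negP => hi.
    move: hk; rewrite leqn0 => /eqP /cards0_eq h0; by move: hi; rewrite -inSupp h0 inE.
  by rewrite proj0.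
case: (boolP (a == 0)) => [/eqP ->|anz]; first by rewrite proj0.
have [h hh] := nzrowP anz.
have [D [hD hD' hDs]] := circuit_in (leqnn _) Pa hh.
have [eta [enz Pe se]] := circuit_exact hD.
have hDS : D \subset S by apply: subset_trans hDs _; apply/supp_inE.
have heh : eta 0 h != 0 by rewrite -inSupp se.
have hsub : supp eta \subset supp a by rewrite se.
have hlt := card_elim heh hsub hh.
have hS' : supp_in S (a - (a 0 h / eta 0 h) *: eta).
  have hSe : supp_in S eta by apply/supp_inE; rewrite se.
  by move=> i hi; rewrite !mxE (hS i hi) (hSe i hi) mulr0 subr0.
have IH' := IH _ (leq_trans hlt hk) hS' (PB _ Pa Pe).
have -> : proj T a = proj T (a - (a 0 h / eta 0 h) *: eta) + (a 0 h / eta 0 h) *: proj T eta.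
  by rewrite proj_lin subrK.
apply: PD IH' (PZ _ _).
case: (classic (exists x, x \in D /\ x \in T)) => [[x [xD xT]]|hno].
  rewrite proj_id //; apply/supp_inE; rewrite se; exact: hcl hD hDS xD xT.
have -> : proj T eta = 0; last exact: P0.
apply/rowP => i; rewrite !mxE; case: ifP => // iT.
apply/eqP/negPn/negP => hi; apply: hno; exists i; by rewrite -se inSupp.
Qed.

Lemma class_closed S e D x : e \in S -> circuit dep D -> D \subset S -> x \in D ->
  x \in cls S e -> D \subset cls S e.
Proof.
move=> eS hD hDS xD /clsP [xS hx]; apply/subsetP => g gD; apply/clsP; split.
  exact: (subsetP hDS).
right; case: hx => [xe|[D' [hD' hD'S eD' xD']]].
  subst x; by exists D.
have [C [hC eC gC sC]] := circ_trans (leqnn _) hD' hD eD' gD (ex_intro _ x (conj xD' xD)).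
exists C; split => //; apply: subset_trans sC _; by rewrite subUset hD'S hDS.
Qed.

Lemma sep_class S e : e \in S -> Sep S (cls S e).
Proof.
move=> eS; apply: sep_of_closed.
  by apply/subsetP => f /clsP [].
move=> D x hD hDS xD xc; exact: class_closed eS hD hDS xD xc.
Qed.

Lemma sep_sub_class S T e : Sep S T -> e \in T -> cls S e \subset T.
Proof.
move=> hT eT; apply/subsetP => f /clsP [fS [->|[D [hD hDS eD fD]]]] //.
exact: (subsetP (sep_circuit hT hD hDS eD eT)).
Qed.

Lemma conn_iff S : connected_on dep S <->
  (forall T, Sep S T -> forall e f, e \in T -> f \in S -> f \in T).
Proof.
split.
  move=> hc T hT e f eT fS; case: (eqVneq e f) => [<-|nef] //.
  have eS : e \in S := subsetP hT.1 e eT.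
  have [C [hC hCS eC fC]] := hc e f eS fS nef.
  exact: (subsetP (sep_circuit hT hC hCS eC eT)).
move=> h e f eS fS nef.
have : f \in cls S e.
  apply: (h _ (sep_class eS) e) => //; apply/clsP; split => //; by left.
move/clsP => [_ [fe|[C hC]]]; last by exists C.
by rewrite fe eqxx in nef.
Qed.

Lemma cls_conn S e : e \in S -> connected_on dep (cls S e).
Proof.
move=> eS f g /clsP [fS hf] /clsP [gS hg] nfg.
suff [C [hC hCS fC gC]] : rel S f g.
  exists C; split => //; apply: (class_closed eS hC hCS fC); apply/clsP; by split.
case: hf => [fe|[D1 [h1 s1 e1 f1]]]; case: hg => [ge|[D2 [h2 s2 e2 g2]]].
- by rewrite fe ge eqxx in nfg.
- subst f; by exists D2.
- subst g; by exists D1.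
have [C [hC fC gC sC]] := circ_trans (leqnn _) h1 h2 f1 g2 (ex_intro _ e (conj e1 e2)).
exists C; split => //; apply: subset_trans sC _; by rewrite subUset s1 s2.
Qed.

Lemma comp_class S e : e \in S -> component dep S (cls S e).
Proof.
move=> eS; split; [by apply/subsetP => f /clsP [] | exact: cls_conn |].
move=> C' hsub hC'S hc'; apply/eqP; rewrite eqEsubset hsub andbT.
apply/subsetP => f fC'; apply/clsP; split; first exact: (subsetP hC'S).
case: (eqVneq f e) => [->|nfe]; first by left.
right; have eC' : e \in C' by apply: (subsetP hsub); apply/clsP; split => //; left.
have [C [hC hCC eC fC]] := hc' e f eC' fC' (ltac:(by rewrite eq_sym)).
exists C; split => //; exact: subset_trans hCC hC'S.
Qed.

Lemma comp_nonempty S C : component dep S C -> S != set0 -> C != set0.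
Proof.
move=> [hCS hc hmax] /set0Pn [s sS]; apply/negP => /eqP C0.
have hcs : connected_on dep [set s].
  by move=> e f; rewrite !inE => /eqP -> /eqP ->; rewrite eqxx.
have := hmax [set s]; rewrite C0 sub0set sub1set sS => /(_ isT isT hcs) /setP /(_ s).
by rewrite !inE eqxx.
Qed.

Lemma class_comp S C : component dep S C -> C != set0 -> exists2 e, e \in S & C = cls S e.
Proof.
move=> [hCS hc hmax] /set0Pn [e eC]; have eS := subsetP hCS e eC; exists e => //.
have sub : C \subset cls S e.
  apply/subsetP => f fC; apply/clsP; split; first exact: (subsetP hCS).
  case: (eqVneq f e) => [->|nfe]; first by left.
  right; have [D [hD hDC eD fD]] := hc e f eC fC (ltac:(by rewrite eq_sym)).
  exists D; split => //; exact: subset_trans hDC hCS.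
symmetry; apply: hmax => //; [by apply/subsetP => f /clsP [] | exact: cls_conn].
Qed.

Lemma comp_sep S C : component dep S C -> Sep S C.
Proof.
move=> hc; case: (boolP (C == set0)) => [/eqP ->|nz].
  split; first exact: sub0set.
  move=> a _ _; have -> : proj set0 a = 0 by apply/rowP => i; rewrite !mxE inE.
  exact: P0.
have [e eS ->] := class_comp hc nz; exact: sep_class.
Qed.

Lemma dep_delta X e : e \in X -> P (delta e) -> dep X.
Proof. move=> eX he; exists (delta e); split => //; [exact: delta_nz | exact: delta_supp]. Qed.

Lemma dep1 e : dep [set e] -> P (delta e).
Proof.
move=> [a [anz ha Pa]]; have [h hh] := nzrowP anz.
have he : h = e.
  case: (eqVneq h e) => // hne; have hs : h \notin [set e] by rewrite inE.
  by move: hh; rewrite ha // eqxx.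
subst h; have -> : delta e = (a 0 e)^-1 *: a; last exact: PZ.
apply/rowP => i; rewrite !mxE; case: eqP => [->|/eqP nie]; first by rewrite mulVf.
by rewrite (ha i) ?mulr0 // inE.
Qed.

Lemma rank0_iff S : rank_of dep S 0 <-> forall e, e \in S -> P (delta e).
Proof.
split.
  move=> [_ hr] e eS; apply: NNPP => hn; have := hr [set e].
  rewrite sub1set eS cards1 => /(_ isT (fun hd => hn (dep1 hd))) //.
move=> h; split.
  exists set0; [exact: sub0set | split; last by rewrite cards0].
  move=> [a [anz ha _]]; move/negP: anz; apply; apply/eqP/rowP => i; by rewrite mxE ha // inE.
move=> X hXS hX; rewrite leqn0 cards_eq0; apply/negPn/negP => /set0Pn [x xX].
exact: hX (dep_delta xX (h x (subsetP hXS x xX))).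
Qed.

Lemma full_iff S : rank_of dep S #|S| <-> ~ dep S.
Proof.
split.
  move=> [[X hXS [hX hc]] _]; have : X = S by apply/eqP; rewrite eqEcard hXS hc leqnn.
  by move=> <-.
move=> h; split; first by exists S.
move=> X hXS _; exact: subset_leq_card.
Qed.

Lemma rank0_set0 : rank_of dep set0 0.
Proof. apply/rank0_iff => e; by rewrite inE. Qed.

End Sub.


Section Dual.
Variables (F : fieldType) (n : nat).
Implicit Types (a b u : 'rV[F]_n) (X S T C D : {set 'I_n}).

Definition DualH (P Q : 'rV[F]_n -> Prop) S :=
  forall a, supp_in S a -> (Q a <-> forall b, supp_in S b -> P b -> dot b a = 0).
Definition DualPair P1 P2 S := DualH P1 P2 S /\ DualH P2 P1 S.

Lemma DualPair_sym P1 P2 S : DualPair P1 P2 S -> DualPair P2 P1 S.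
Proof. by case. Qed.

Lemma sepT P Q S T : DualH P Q S -> Sep P S T -> Sep Q S T.
Proof.
move=> hD [hTS hT]; split => // a aS Qa.
apply (proj2 (hD _ (proj_supp_in T aS))) => b bS Pb.
rewrite dotC dot_proj dotC; apply: (proj1 (hD a aS) Qa); [exact: proj_supp_in | exact: hT].
Qed.

Lemma restrictH P Q S C : DualH P Q S -> Sep P S C -> DualH P Q C.
Proof.
move=> hD [hCS hC] a aC; have aS : supp_in S a := supp_in_sub hCS aC.
split => [h b bC Pb|h].
  exact: (proj1 (hD a aS) h) b (supp_in_sub hCS bC) Pb.
apply (proj2 (hD a aS)) => b bS Pb.
have -> : dot b a = dot (proj C b) a by rewrite dot_proj proj_id.
exact: h _ (@proj_supp_inT F n C b) (hC b bS Pb).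
Qed.

Variables (P1 P2 : 'rV[F]_n -> Prop).
Hypotheses (h10 : P1 0) (h1D : forall a b, P1 a -> P1 b -> P1 (a + b))
  (h1Z : forall c a, P1 a -> P1 (c *: a)).
Hypotheses (h20 : P2 0) (h2D : forall a b, P2 a -> P2 b -> P2 (a + b))
  (h2Z : forall c a, P2 a -> P2 (c *: a)).
Local Set Default Proof Using "All".

Lemma dual_rank S : DualPair P1 P2 S ->
  (rank_of (depP P1) S 0 <-> rank_of (depP P2) S #|S|).
Proof.
move=> [hA hB]; split.
  move=> /(rank0_iff h10 h1D h1Z) h0; apply/(full_iff h20 h2D h2Z) => [[a [anz aS Pa]]].
  have [i hi] := nzrowP anz.
  have iS : i \in S by apply/negPn/negP => iS; move: hi; rewrite aS // eqxx.
  have := proj1 (hA a aS) Pa (delta i) (@delta_supp F n S i iS) (h0 i iS).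
  by rewrite dot_delta => /eqP; rewrite (negbTE hi).
move=> /(full_iff h20 h2D h2Z) hf; apply/(rank0_iff h10 h1D h1Z) => e eS.
apply (proj2 (hB _ (@delta_supp F n S e eS))) => b bS Pb.
case: (eqVneq b 0) => [->|bnz]; first by rewrite dot0l.
by exfalso; apply: hf; exists b.
Qed.

Lemma dual_sep S T : DualPair P1 P2 S -> (Sep P1 S T <-> Sep P2 S T).
Proof. move=> [hA hB]; split; [exact: sepT hA | exact: sepT hB]. Qed.

Lemma dual_conn S : DualPair P1 P2 S ->
  (connected_on (depP P1) S <-> connected_on (depP P2) S).
Proof.
move=> hD; split => h.
  apply (proj2 (conn_iff h20 h2D h2Z S)) => T hT e f eT fS.
  exact: (proj1 (conn_iff h10 h1D h1Z S) h T (proj2 (dual_sep T hD) hT) e f eT fS).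
apply (proj2 (conn_iff h10 h1D h1Z S)) => T hT e f eT fS.
exact: (proj1 (conn_iff h20 h2D h2Z S) h T (proj1 (dual_sep T hD) hT) e f eT fS).
Qed.

Lemma dual_cls S e : DualPair P1 P2 S -> e \in S -> cls P1 S e = cls P2 S e.
Proof.
move=> [hA hB] eS; apply/eqP; rewrite eqEsubset; apply/andP; split.
  apply: (sep_sub_class h10 h1D h1Z (sepT hB (sep_class h20 h2D h2Z eS))).
  apply/(clsP h20 h2D h2Z); split => //; by left.
apply: (sep_sub_class h20 h2D h2Z (sepT hA (sep_class h10 h1D h1Z eS))).
apply/(clsP h10 h1D h1Z); split => //; by left.
Qed.

Lemma dual_comp S C : DualPair P1 P2 S -> S != set0 ->
  component (depP P1) S C -> component (depP P2) S C.
Proof.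
move=> hD hS hc; have nz := comp_nonempty h10 h1D h1Z hc hS.
have [e eS ->] := class_comp h10 h1D h1Z hc nz.
rewrite (dual_cls hD eS). exact: (@comp_class F n P2 h20 h2D h2Z S e eS).
Qed.

Lemma dual_restrict S C : DualPair P1 P2 S -> Sep P1 S C -> DualPair P1 P2 C.
Proof. move=> [hA hB] hs; split; [exact: restrictH hA hs | exact: restrictH hB (sepT hA hs)]. Qed.

Lemma dual_step S u (Q1 Q2 : 'rV[F]_n -> Prop) : DualPair P1 P2 S -> supp_in S u ->
  (forall b, supp_in S b -> (Q1 b <-> exists c, P1 (b - c *: u))) ->
  (forall a, supp_in S a -> (Q2 a <-> P2 a /\ dot a u = 0)) -> DualPair Q1 Q2 S.
Proof.
move=> [hA hB] uS H1 H2; split.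
  move=> a aS; split.
    move=> /(H2 a aS) [P2a au] b bS /(H1 b bS) [c hc].
    have := proj1 (hA a aS) P2a _ (supp_in_lin c bS uS) hc.
    by rewrite dot_lin (dotC u) au mulr0 subr0.
  move=> h; have hu : Q1 u.
    by apply (proj2 (H1 u uS)); exists 1; rewrite scale1r subrr.
  apply (proj2 (H2 a aS)); split; last by rewrite dotC; apply: h.
  apply (proj2 (hA a aS)) => b bS Pb; apply: h => //.
  by apply (proj2 (H1 b bS)); exists 0; rewrite scale0r subr0.
move=> b bS; split.
  move=> /(H1 b bS) [c hc] a aS /(H2 a aS) [P2a au].
  have := proj1 (hB _ (supp_in_lin c bS uS)) hc a aS P2a.
  by rewrite dot_linr au mulr0 subr0.
move=> h; apply (proj2 (H1 b bS)).
case: (classic (exists a0, [/\ supp_in S a0, P2 a0 & dot a0 u != 0])) => [[a0 [a0S P2a0 a0u]]|hno].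
  exists (dot a0 b / dot a0 u).
  apply (proj2 (hB _ (supp_in_lin _ bS uS))) => a aS P2a.
  have hQ2 : Q2 (a - (dot a u / dot a0 u) *: a0).
    apply (proj2 (H2 _ (supp_in_lin _ aS a0S))); split; first exact: (@PB F n P2 h20 h2D h2Z a a0 (dot a u / dot a0 u) P2a P2a0).
    by rewrite dot_lin divfK // subrr.
  have := h _ (supp_in_lin _ aS a0S) hQ2; rewrite dot_lin dot_linr => /eqP.
  rewrite subr_eq0 => /eqP ->; ring.
exists 0; rewrite scale0r subr0.
apply (proj2 (hB b bS)) => a aS P2a; refine (h a aS _).
apply (proj2 (H2 a aS)); split => //; apply/eqP/negPn/negP => hau; apply: hno; by exists a.
Qed.

End Dual.


Section Main.
Variables (F : fieldType) (m n : nat) (A : 'M[F]_(m, n)).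

Definition Pm k (M : 'M[F]_(k, n)) (K : 'M[F]_k) : 'rV[F]_n -> Prop :=
  fun a => (a *m M^T <= K)%MS.

Lemma Pm0 k (M : 'M[F]_(k, n)) K : Pm M K 0.
Proof. by rewrite /Pm mul0mx sub0mx. Qed.
Lemma PmD k (M : 'M[F]_(k, n)) K a b : Pm M K a -> Pm M K b -> Pm M K (a + b).
Proof. rewrite /Pm mulmxDl; exact: addmx_sub. Qed.
Lemma PmZ k (M : 'M[F]_(k, n)) K c a : Pm M K a -> Pm M K (c *: a).
Proof. rewrite /Pm -scalemxAl; exact: scalemx_sub. Qed.

Lemma subm_sub k l (x y : 'M[F]_(k, l)) p (K : 'M[F]_(p, l)) :
  (x <= K)%MS -> (y <= K)%MS -> (x - y <= K)%MS.
Proof. move=> hx hy; rewrite -scaleN1r; apply: addmx_sub hx (scalemx_sub _ hy). Qed.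

Lemma addv_iff (w v : 'rV[F]_m) (K : 'M[F]_m) :
  (w <= K + v)%MS <-> exists c, (w - c *: v <= K)%MS.
Proof.
split.
  move/sub_addsmxP => [[x y] /= ->]; exists (y 0 0).
  have -> : y *m v = y 0 0 *: v by rewrite {1}(mx11_scalar y) mul_scalar_mx.
  by rewrite addrK; exact: submxMl.
move=> [c h]; have -> : w = (w - c *: v) + c *: v by rewrite subrK.
apply: addmx_sub; first exact: submx_trans h (addsmxSl _ _).
apply: scalemx_sub; exact: addsmxSr.
Qed.

Lemma dot_mx (a b : 'rV[F]_n) : (a *m b^T) 0 0 = dot a b.
Proof. by rewrite mxE; apply: eq_bigr => i _; rewrite mxE. Qed.

Lemma Pcol p (B : 'M[F]_(p, n)) (u a : 'rV[F]_n) :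
  Pm (col_mx B u) 0 a <-> Pm B 0 a /\ dot a u = 0.
Proof.
rewrite /Pm tr_col_mx mul_mx_row !submx0 row_mx_eq0; split.
  move/andP => [h1 /eqP h2]; split => //; by rewrite -dot_mx h2 mxE.
move=> [h1 h2]; rewrite h1 /=; apply/eqP/rowP => i; by rewrite (ord1 i) dot_mx h2 mxE.
Qed.

Ltac pm := first [exact: Pm0 | exact: PmD | exact: PmZ].

Section W.
Variables (K : 'M[F]_m) (p : nat) (B : 'M[F]_(p, n)) (S : {set 'I_n}).
Hypothesis hD : DualPair (Pm A K) (Pm B 0) S.

Lemma Drank : rank_of (mat_dep A K) S 0 <-> rank_of (mat_dep B 0) S #|S|.
Proof. apply: dual_rank hD; pm. Qed.
Lemma Dconn : connected_on (mat_dep A K) S <-> connected_on (mat_dep B 0) S.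
Proof. apply: dual_conn hD; pm. Qed.
Lemma Dcomp12 C : S != set0 -> component (mat_dep A K) S C -> component (mat_dep B 0) S C.
Proof. apply: dual_comp hD; pm. Qed.
Lemma Dcomp21 C : S != set0 -> component (mat_dep B 0) S C -> component (mat_dep A K) S C.
Proof. apply: dual_comp (DualPair_sym hD); pm. Qed.
Lemma Drestrict C : component (mat_dep A K) S C -> DualPair (Pm A K) (Pm B 0) C.
Proof. move=> hc; apply: dual_restrict hD _; try pm. apply: comp_sep hc; pm. Qed.
Lemma Dstep u K' p' (B' : 'M[F]_(p', n)) : supp_in S u ->
  (forall b, supp_in S b -> (Pm A K' b <-> exists c, Pm A K (b - c *: u))) ->
  (forall a, supp_in S a -> (Pm B' 0 a <-> Pm B 0 a /\ dot a u = 0)) ->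
  DualPair (Pm A K') (Pm B' 0) S.
Proof. move=> uS H1 H2; apply: (dual_step _ _ _ _ _ _ hD uS H1 H2); pm. Qed.
Lemma Dne : ~ rank_of (mat_dep A K) S 0 -> S != set0.
Proof.
move=> hr; apply/negP => /eqP S0; apply: hr; rewrite S0; apply: rank0_set0; pm.
Qed.
End W.

Lemma c2d d K S : csd_le A d K S ->
  forall p (B : 'M[F]_(p, n)), DualPair (Pm A K) (Pm B 0) S -> dsd_le d B S.
Proof.
elim => {d K S}.
- move=> d K S hr p B hD; apply: dsd_free; exact: (proj1 (Drank hD) hr).
- move=> d K S hr hc hcomp IH p B hD; apply: dsd_disconnected.
  + by move=> /(proj2 (Drank hD)).
  + by move=> /(proj2 (Dconn hD)).
  + move=> C hC; have hC1 := Dcomp21 hD (Dne hr) hC.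
    exact: IH hC1 p B (Drestrict hD hC1).
- move=> d K S v hr hc hcsd IH p B hD.
  have hnf : ~ rank_of (mat_dep B 0) S #|S| by move=> /(proj2 (Drank hD)).
  have hc2 : connected_on (mat_dep B 0) S by exact: (proj1 (Dconn hD)).
  case: (classic (exists b0, [/\ supp_in S b0, Pm A (K + v)%MS b0 & ~ Pm A K b0])) =>
    [[b0 [b0S h1 h2]]|hno].
  + apply: (@dsd_connected _ _ d p B S b0 hnf hc2).
    apply: IH; apply: (Dstep hD b0S) => [b bS|a aS]; last exact: Pcol.
    have [c0 hc0] := proj1 (addv_iff _ _ _) h1.
    have c0nz : c0 != 0.
      apply/eqP => c00; apply: h2; move: hc0; by rewrite c00 scale0r subr0.
    split.
      move=> /(proj1 (addv_iff _ _ _)) [c hcc]; exists (c / c0).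
      rewrite /Pm.
      have -> : (b - (c / c0) *: b0) *m A^T =
          (b *m A^T - c *: v) - (c / c0) *: (b0 *m A^T - c0 *: v).
        rewrite mulmxBl -scalemxAl scalerBr scalerA divfK //.
        by rewrite opprB addrA subrK.
      apply: subm_sub hcc (scalemx_sub _ hc0).
    move=> [c hcc]; rewrite /Pm in hcc h1 *.
    have -> : b *m A^T = (b - c *: b0) *m A^T + c *: (b0 *m A^T).
      by rewrite mulmxBl -scalemxAl subrK.
    apply: addmx_sub; first exact: submx_trans hcc (addsmxSl _ _).
    exact: scalemx_sub h1.
  + apply: (@dsd_connected _ _ d p B S 0 hnf hc2).
    apply: IH; apply: (Dstep hD (fun i _ => mxE _ _ _ _)) => [b bS|a aS]; last exact: Pcol.
    split.
      move=> h; exists 0; rewrite scaler0 subr0; apply: NNPP => hn; apply: hno; by exists b.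
    move=> [c]; rewrite scaler0 subr0 => h; exact: submx_trans h (addsmxSl _ _).
Qed.

Lemma d2c d p (B : 'M[F]_(p, n)) S : dsd_le d B S ->
  forall K, DualPair (Pm A K) (Pm B 0) S -> csd_le A d K S.
Proof.
elim => {d p B S}.
- move=> d p B S hf K hD; apply: csd_rank0; exact: (proj2 (Drank hD) hf).
- move=> d p B S hf hc hcomp IH K hD; apply: csd_disconnected.
  + by move=> /(proj1 (Drank hD)).
  + by move=> /(proj1 (Dconn hD)).
  + move=> C hC.
    have hr : ~ rank_of (mat_dep A K) S 0 by move=> /(proj1 (Drank hD)).
    have hne := Dne hr.
    have hC2 := Dcomp12 hD hne hC.
    exact: IH hC2 K (Drestrict hD hC).
- move=> d p B S u hf hc hd IH K hD.
  have hr : ~ rank_of (mat_dep A K) S 0 by move=> /(proj1 (Drank hD)).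
  have hc1 : connected_on (mat_dep A K) S by exact: (proj2 (Dconn hD)).
  apply: (@csd_connected _ _ _ A d K S (proj S u *m A^T) hr hc1).
  apply: IH; apply: (Dstep hD (@proj_supp_inT F n S u)) => [b bS|a aS].
    rewrite /Pm; split.
      move=> /(proj1 (addv_iff _ _ _)) [c hcc]; exists c; by rewrite mulmxBl -scalemxAl.
    move=> [c hcc]; apply/(addv_iff _ _ _); exists c; by rewrite scalemxAl -mulmxBl.
  rewrite -(dot_supp _ aS); exact: Pcol.
Qed.

End Main.


Section Fin.
Variables (F : fieldType) (m n : nat) (A : 'M[F]_(m, n)).

Lemma csd_mono d K S : csd_le A d K S -> forall d', leq d d' -> csd_le A d' K S.
Proof.
elim => {d K S}.
- move=> d K S h d' _; exact: csd_rank0.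
- move=> d K S hr hc hcomp IH d' hd; apply: csd_disconnected => // C hC; exact: IH.
- move=> d K S v hr hc hcsd IH [|d'] hd //; exact: csd_connected hr hc (IH d' hd).
Qed.

Definition nl (K : 'M[F]_m) (S : {set 'I_n}) := #|[set e in S | ~~ (delta e *m A^T <= K)%MS]|.
Definition meas K (S : {set 'I_n}) := (nl K S * n.+1 + #|S|)%N.

Lemma csd_ex N : forall K S, (meas K S < N)%N -> csd_le A N K S.
Proof.
elim: N => [|N IH] K S hN; first by rewrite ltn0 in hN.
case: (classic (rank_of (mat_dep A K) S 0)) => hr; first exact: csd_rank0.
case: (classic (connected_on (mat_dep A K) S)) => hc.
  have [e [eS he]] : exists e, e \in S /\ ~ Pm A K (delta e).
    apply: NNPP => hn; apply: hr.
    apply (proj2 (@rank0_iff F n (Pm A K) (Pm0 A K) (@PmD _ _ _ A K) (@PmZ _ _ _ A K) S)).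
    move=> e eS; apply: NNPP => he; apply: hn; by exists e.
  apply: (csd_connected (v := delta e *m A^T) hr hc); apply: IH.
  move: hN; rewrite ltnS => hN; apply: leq_trans _ hN; rewrite /meas ltn_add2r ltn_pmul2r //.
  apply: proper_card; rewrite properE; apply/andP; split.
    apply/subsetP => x; rewrite !inE => /andP [xS hx]; rewrite xS /=.
    by apply: contra hx => hx; exact: submx_trans hx (addsmxSl _ _).
  apply/subsetP => /(_ e); rewrite !inE eS /= addsmxSr /=.
  move=> h; apply: he; apply/negPn; apply/negP => hh; by have := h hh.
apply: csd_disconnected => // C hC.
apply: (csd_mono (IH K C _) (leqnSn N)).
have [hCS hCc _] := hC.
have hCneq : C != S by apply/eqP => hCS'; apply: hc; rewrite -hCS'.
have hlt : (#|C| < #|S|)%N by apply: proper_card; rewrite properEneq hCneq hCS.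
have hle : (nl K C <= nl K S)%N.
  apply: subset_leq_card; apply/subsetP => x; rewrite !inE => /andP [xC ->].
  by rewrite (subsetP hCS x xC).
move: hN; rewrite ltnS => hN; apply: leq_trans _ hN; rewrite /meas -addnS; apply: leq_add => //.
exact: leq_mul.
Qed.

Lemma entry_dot k (b : 'rV[F]_n) (M : 'M[F]_(k, n)) j : (b *m M^T) 0 j = dot b (row j M).
Proof. rewrite mxE /dot; apply: eq_bigr => i _; by rewrite !mxE. Qed.

Lemma init_dual p (B : 'M[F]_(p, n))
    (hB : forall x : 'rV[F]_n,
        (x <= B)%MS <->
        (forall w : 'rV[F]_n, (w <= A)%MS -> \sum_(i < n) x 0 i * w 0 i = 0)) :
  DualPair (Pm A 0) (Pm B 0) setT.
Proof.
have kerA : forall b, Pm A 0 b <-> (b <= B)%MS.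
  move=> b; rewrite /Pm submx0; split.
    move/eqP => h; apply (proj2 (hB b)) => w /submxP [y ->].
    rewrite -/(dot b (y *m A)) -dot_mx trmx_mul mulmxA h mul0mx mxE //.
  move=> hb; apply/eqP/rowP => j; rewrite entry_dot mxE.
  exact: (proj1 (hB b) hb) _ (row_sub j A).
have orthB : forall a, Pm B 0 a <-> (forall b, (b <= B)%MS -> dot b a = 0).
  move=> a; rewrite /Pm submx0; split.
    move/eqP => h b /submxP [y ->].
    rewrite -dot_mx -mulmxA.
    have -> : B *m a^T = (a *m B^T)^T by rewrite trmx_mul trmxK.
    by rewrite h trmx0 mulmx0 mxE.
  move=> h; apply/eqP/rowP => j; rewrite entry_dot mxE dotC; apply: h; exact: row_sub.
have sT : forall (b : 'rV[F]_n), supp_in setT b by move=> b i; rewrite inE.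
split => a _.
  rewrite orthB; split => h b hb.
    move=> hA; exact: h _ (proj1 (kerA b) hA).
  exact: h _ (sT b) (proj2 (kerA b) hb).
rewrite kerA; split.
  move=> ha b _ hb; rewrite dotC; exact: (proj1 (orthB b) hb) _ ha.
move=> h.
set Kb := kermx B^T.
have hKa : (a <= kermx Kb^T)%MS.
  rewrite sub_kermx; apply/eqP/rowP => j; rewrite entry_dot mxE dotC.
  apply: h (sT _) _; rewrite /Pm submx0 -row_mul /Kb mulmx_ker.
  by apply/eqP/rowP => i; rewrite !mxE.
apply: submx_trans hKa _.
have hBX : (B <= kermx Kb^T)%MS.
  rewrite sub_kermx; have -> : B *m Kb^T = (Kb *m B^T)^T by rewrite (trmx_mul Kb B^T) trmxK.
  by rewrite /Kb mulmx_ker trmx0.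
have := (mxrank_leqif_sup hBX).2; move=> <-.
rewrite mxrank_ker mxrank_tr mxrank_ker mxrank_tr subKn //; exact: rank_leq_col.
Qed.

End Fin.

Unset Implicit Arguments.
Set Strict Implicit.

Theorem theorem2 (F : fieldType) (m n p : nat)
    (A : 'M[F]_(m, n)) (B : 'M[F]_(p, n))
    (hB : forall x : 'rV[F]_n,
        (x <= B)%MS <->
        (forall w : 'rV[F]_n, (w <= A)%MS -> \sum_(i < n) x 0 i * w 0 i = 0)) :
  exists d : nat, csd_is A d /\ dsd_is B d.
Proof.
have hD := init_dual hB.
have hex : exists d, pb (csd_le A d 0 setT).
  exists (meas A 0 setT).+1; apply/pbP; apply: csd_ex; exact: ltnSn.
case: (ex_minnP hex) => d /pbP hd hmin.
exists d; split.
  split => // d' hd'; apply: hmin; exact/pbP.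
split; first exact: c2d hd _ _ hD.
move=> d' hd'; apply: hmin; apply/pbP; exact: d2c hd' _ hD.
Qed.
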